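(* Let $A,B$ be idempotent $\Gamma$-graded rings and ${}_AP_B$, ${}_BQ_A$ graded bimodules unital on both sides, such that there is a graded Morita context $(A,B,P,Q,\mu,\nu)$ with surjective trace maps. For every unital graded left $A$-module $U$, the map $\eta:B\cdot\mathrm{HOM}_A(P,A)\otimes_AU\to B\cdot\mathrm{HOM}_A(P,U)$ given by $\eta(g\otimes u)(p)=g(p)u$ is a graded epimorphism of degree $e$ of graded left $B$-modules whose kernel is torsion (i.e. annihilated elementwise by $B$).
   Context: $\Gamma$ is a fixed multiplicative group with identity $e$. Rings are associative $\Gamma$-graded, not necessarily unital; $A$ is idempotent if $A^2=A$; a module is unital if $AM=M$. A left-linear $f$ is graded of degree $\sigma$ if $f(M_\tau)\subseteq N_{\tau\sigma}$; $\mathrm{HOM}$ is the direct sum over degrees. $\mathrm{HOM}_A(P,N)$ is a graded left $B$-module via $(bf)(p)=f(pb)$, and $\mathrm{HOM}_A(P,A)$ is also a right $A$-module via $(fa)(p)=f(p)a$; $B\cdot H$ denotes finite sums $\sum b_ih_i$. A graded Morita context $(A,B,P,Q,\mu,\nu)$: idempotent graded rings $A,B$, graded bimodules ${}_AP_B$, ${}_BQ_A$ unital on both sides, degree-$e$ graded bimodule maps $\mu:P\otimes_BQ\to A$, $\langle p,q\rangle=\mu(p\otimes q)$, $\nu:Q\otimes_AP\to B$, $[q,p]=\nu(q\otimes p)$, with $p'[q,p]=\langle p',q\rangle p$ and $q'\langle p,q\rangle=[q',p]q$. *)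

(* Defs.v *)
From HB Require Import structures.
From mathcomp Require Import all_boot all_algebra.
From Stdlib Require List.

Set Implicit Arguments.
Unset Strict Implicit.
Unset Printing Implicit Defensive.
Import GRing.Theory.
Local Open Scope ring_scope.

Record ggroup := GGroup {
  gcar :> Type;
  gmul : gcar -> gcar -> gcar;
  gid : gcar;
  ginv : gcar -> gcar;
  gmulA : forall x y z, gmul x (gmul y z) = gmul (gmul x y) z;
  gmul1 : forall x, gmul gid x = x;
  gmulV : forall x, gmul (ginv x) x = gid
}.

Section Grading.
Variable G : ggroup.

(** [deg s m] : m is homogeneous of degree s, i.e. m lies in M_s.
    [is_grading deg] : M is the direct sum of the subgroups M_s. *)
Definition is_grading (M : zmodType) (deg : G -> M -> Prop) : Prop :=
  [/\ (forall s, deg s 0),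
      (forall s x y, deg s x -> deg s y -> deg s (x - y)),
      (forall m : M, exists l : seq (G * M)%type,
          (forall c, List.In c l -> deg c.1 c.2) /\ m = \sum_(c <- l) c.2)
    & (forall l : seq (G * M)%type, List.NoDup (map fst l) ->
          (forall c, List.In c l -> deg c.1 c.2) ->
          \sum_(c <- l) c.2 = 0 -> forall c, List.In c l -> c.2 = 0)].
End Grading.

Record gring (G : ggroup) := GRingPack {
  rcar :> zmodType;
  rmul : rcar -> rcar -> rcar;
  rmulA : forall x y z, rmul x (rmul y z) = rmul (rmul x y) z;
  rmulDl : forall x y z, rmul (x + y) z = rmul x z + rmul y z;
  rmulDr : forall x y z, rmul x (y + z) = rmul x y + rmul x z;
  rdeg : G -> rcar -> Prop;
  rdeg_grading : is_grading rdeg;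
  rdeg_mul : forall s t x y, rdeg s x -> rdeg t y -> rdeg (gmul s t) (rmul x y)
}.

Record glmod (G : ggroup) (A : gring G) := GLModPack {
  lcar :> zmodType;
  lact : A -> lcar -> lcar;
  lactDl : forall a b m, lact (a + b) m = lact a m + lact b m;
  lactDr : forall a m n, lact a (m + n) = lact a m + lact a n;
  lactA : forall a b m, lact (rmul a b) m = lact a (lact b m);
  ldeg : G -> lcar -> Prop;
  ldeg_grading : is_grading ldeg;
  ldeg_act : forall s t a m, rdeg s a -> ldeg t m -> ldeg (gmul s t) (lact a m)
}.

Record gbimod (G : ggroup) (A B : gring G) := GBimodPack {
  bcar :> zmodType;
  bl : A -> bcar -> bcar;
  br : bcar -> B -> bcar;
  blDl : forall a a' m, bl (a + a') m = bl a m + bl a' m;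
  blDr : forall a m n, bl a (m + n) = bl a m + bl a n;
  blA : forall a a' m, bl (rmul a a') m = bl a (bl a' m);
  brDl : forall m n b, br (m + n) b = br m b + br n b;
  brDr : forall m b b', br m (b + b') = br m b + br m b';
  brA : forall m b b', br m (rmul b b') = br (br m b) b';
  blr : forall a m b, br (bl a m) b = bl a (br m b);
  bdeg : G -> bcar -> Prop;
  bdeg_grading : is_grading bdeg;
  bdeg_l : forall s t a m, rdeg s a -> bdeg t m -> bdeg (gmul s t) (bl a m);
  bdeg_r : forall s t m b, bdeg t m -> rdeg s b -> bdeg (gmul t s) (br m b)
}.

Section Defs.
Variable G : ggroup.

Definition idempotent_ring (A : gring G) : Prop :=
  forall a : A, exists l : seq (A * A)%type, a = \sum_(c <- l) rmul c.1 c.2.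

Definition lunital (A : gring G) (M : zmodType) (act : A -> M -> M) : Prop :=
  forall m : M, exists l : seq (A * M)%type, m = \sum_(c <- l) act c.1 c.2.
Definition runital (B : gring G) (M : zmodType) (act : M -> B -> M) : Prop :=
  forall m : M, exists l : seq (M * B)%type, m = \sum_(c <- l) act c.1 c.2.

Definition bimod_unital (A B : gring G) (P : gbimod A B) : Prop :=
  lunital (@bl _ _ _ P) /\ runital (@br _ _ _ P).

(** The degree-e bimodule maps
    mu : P (x)_B Q -> A and nu : Q (x)_A P -> B are given, via the universal
    property of the tensor product, as balanced biadditive maps
    <p,q> = mu p q and [q,p] = nu q p. *)
Definition morita_context (A B : gring G) (P : gbimod A B) (Q : gbimod B A)
    (mu : P -> Q -> A) (nu : Q -> P -> B) : Prop :=
  [/\ idempotent_ring A, idempotent_ring B, bimod_unital P & bimod_unital Q] /\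
  [/\ (forall p p' q, mu (p + p') q = mu p q + mu p' q),
      (forall p q q', mu p (q + q') = mu p q + mu p q'),
      (forall p b q, mu (br p b) q = mu p (bl b q)),
      (forall a p q, mu (bl a p) q = rmul a (mu p q)) &
      (forall p q a, mu p (br q a) = rmul (mu p q) a)] /\
  (forall s t p q, bdeg s p -> bdeg t q -> rdeg (gmul s t) (mu p q)) /\
  [/\ (forall q q' p, nu (q + q') p = nu q p + nu q' p),
      (forall q p p', nu q (p + p') = nu q p + nu q p'),
      (forall q a p, nu (br q a) p = nu q (bl a p)),
      (forall b q p, nu (bl b q) p = rmul b (nu q p)) &
      (forall q p b, nu q (br p b) = rmul (nu q p) b)] /\
  (forall s t q p, bdeg s q -> bdeg t p -> rdeg (gmul s t) (nu q p)) /\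
  (forall p' q p, br p' (nu q p) = bl (mu p' q) p) /\
  (forall q' p q, br q' (mu p q) = bl (nu q' p) q).

(** surjectivity of a trace map (its image is the set of finite sums) *)
Definition trace_surj (A : gring G) (M N : Type) (mu : M -> N -> A) : Prop :=
  forall a : A, exists l : seq (M * N)%type, a = \sum_(c <- l) mu c.1 c.2.

Section Hom.
Variables (A : gring G) (M N : zmodType).
Variables (am : A -> M -> M) (an : A -> N -> N).
Variables (dM : G -> M -> Prop) (dN : G -> N -> Prop).

Definition Alinear (f : M -> N) : Prop :=
  (forall m m', f (m + m') = f m + f m') /\ (forall a m, f (am a m) = an a (f m)).

Definition graded_of (s : G) (f : M -> N) : Prop :=
  forall t m, dM t m -> dN (gmul t s) (f m).

Definition in_HOM (f : M -> N) : Prop :=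
  exists l : seq (G * (M -> N))%type,
    (forall c, List.In c l -> Alinear c.2 /\ graded_of c.1 c.2) /\
    (forall m, f m = \sum_(c <- l) c.2 m).

(** f \in B . HOM_A(M,N), for M a right B-module, with (b f)(m) = f(m b) *)
Definition in_BHOM (B : gring G) (mb : M -> B -> M) (f : M -> N) : Prop :=
  exists l : seq (B * (M -> N))%type,
    (forall c, List.In c l -> in_HOM c.2) /\
    (forall m, f m = \sum_(c <- l) c.2 (mb m c.1)).
End Hom.

Section Eta.
Variables (A B : gring G) (P : gbimod A B) (U : glmod A).

(** the right A-module X := B . HOM_A(P,A) (as a predicate on P -> A) *)
Definition inX (x : P -> A) : Prop :=
  in_BHOM (@bl _ _ _ P) (@rmul _ A) (@bdeg _ _ _ P) (@rdeg _ A) (@br _ _ _ P) x.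

Definition Xbalanced (W : zmodType) (phi : (P -> A) -> U -> W) : Prop :=
  [/\ (forall x x' u, inX x -> inX x' ->
         phi (fun p => x p + x' p) u = phi x u + phi x' u),
      (forall x u u', inX x -> phi x (u + u') = phi x u + phi x u')
    & (forall x a u, inX x ->
         phi (fun p => rmul (x p) a) u = phi x (lact a u))].

(** Elements of X (x)_A U are represented by finite lists of pure tensors
    [:: (x_1,u_1); ...] standing for sum_i x_i (x) u_i, with all x_i in X.
    Such an element is zero in the tensor product iff it is killed by
    every A-balanced biadditive map (universal property). *)
Definition in_T (s : seq ((P -> A) * U)%type) : Prop := forall c, List.In c s -> inX c.1.

Definition tensor_zero (s : seq ((P -> A) * U)%type) : Prop :=
  forall (W : zmodType) (phi : (P -> A) -> U -> W),
    Xbalanced phi -> \sum_(c <- s) phi c.1 c.2 = 0.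

Definition Tact (b : B) (s : seq ((P -> A) * U)%type) : seq ((P -> A) * U)%type :=
  map (fun c => (fun p => c.1 (br p b), c.2)) s.

Definition T_homog (s : G) (l : seq ((P -> A) * U)%type) : Prop :=
  forall c, List.In c l -> exists r t,
    graded_of (@bdeg _ _ _ P) (@rdeg _ A) r c.1 /\ ldeg t c.2 /\ gmul r t = s.

Definition eta (s : seq ((P -> A) * U)%type) : P -> U :=
  fun p => \sum_(c <- s) lact (c.1 p) c.2.

Definition inBHOM_PU (h : P -> U) : Prop :=
  in_BHOM (@bl _ _ _ P) (@lact _ _ U) (@bdeg _ _ _ P) (@ldeg _ _ U) (@br _ _ _ P) h.
End Eta.

End Defs.

Arguments inX {G A B} P x.
Arguments in_T {G A B} P {U} s.
Arguments tensor_zero {G A B} P U s.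
Arguments Tact {G A B} P {U} b s.
Arguments T_homog {G A B} P U s l.
Arguments eta {G A B} P U s p.
Arguments inBHOM_PU {G A B} P U h.

(* Main.v *)
Require Import Defs.
From mathcomp Require Import all_boot all_algebra.
From Stdlib Require List.
From Stdlib Require Import FunctionalExtensionality.
Set Implicit Arguments.
Unset Strict Implicit.
Unset Printing Implicit Defensive.
Import GRing.Theory.
Local Open Scope ring_scope.

Lemma sum_add (V W : zmodType) (f : V -> W) (I : Type) (l : seq I) (F : I -> V) :
  (forall x y, f (x + y) = f x + f y) -> f (\sum_(i <- l) F i) = \sum_(i <- l) f (F i).
Proof.
move=> H. have f0 : f 0 = 0 by apply: (addrI (f 0)); rewrite -H !addr0.
elim: l => [|a l IH]; by rewrite ?big_nil ?big_cons ?H ?IH.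
Qed.

Lemma eq_big_In (V : zmodType) (I : Type) (l : seq I) (F F' : I -> V) :
  (forall i, List.In i l -> F i = F' i) -> \sum_(i <- l) F i = \sum_(i <- l) F' i.
Proof.
elim: l => [|a l IH] H; first by rewrite !big_nil.
rewrite !big_cons H /=; last by left.
by rewrite IH // => i Hi; apply: H; right.
Qed.

Lemma deg_sum (G : ggroup) (M : zmodType) (d : G -> M -> Prop) s (I : Type) (l : seq I) (F : I -> M) :
  is_grading d -> (forall i, List.In i l -> d s (F i)) -> d s (\sum_(i <- l) F i).
Proof.
rewrite /is_grading; case=> d0 dB _ _.
have dD : forall x y, d s x -> d s y -> d s (x + y).
  move=> x y Hx Hy; have -> : x + y = x - (0 - y) by rewrite sub0r opprK.
  by apply: (dB) => //; apply: (dB).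
elim: l => [|a l IH] H; first by rewrite big_nil.
rewrite big_cons; apply: dD; first by apply: H; left.
by apply: IH => i Hi; apply: H; right.
Qed.

Section Gen.
Variables (G : ggroup) (A : gring G) (M N : zmodType) (am : A -> M -> M) (an : A -> N -> N)
  (dM : G -> M -> Prop) (dN : G -> N -> Prop).

Lemma in_HOM_ext f g : (forall m, f m = g m) -> in_HOM am an dM dN f -> in_HOM am an dM dN g.
Proof. move=> e [l [H1 H2]]; exists l; split=> // m; by rewrite -e. Qed.

Lemma in_HOM_single s f : Alinear am an f -> graded_of dM dN s f -> in_HOM am an dM dN f.
Proof.
move=> H1 H2; exists [:: (s, f)]; split; first by move=> c [<-|[]].
by move=> m; rewrite big_seq1.
Qed.

Lemma in_HOM_sum (I : Type) (l : seq I) (F : I -> M -> N) :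
  (forall i, List.In i l -> in_HOM am an dM dN (F i)) ->
  in_HOM am an dM dN (fun m => \sum_(i <- l) F i m).
Proof.
elim: l => [|a l IH] H.
  by exists [::]; split => // m; rewrite !big_nil.
have [l1 [H1 E1]] := H a (or_introl erefl).
have [l2 [H2 E2]] := IH (fun i Hi => H i (or_intror Hi)).
exists (l1 ++ l2); split.
  by move=> c Hc; case: (List.in_app_or _ _ _ Hc); auto.
move=> m; rewrite big_cat big_cons /= E1; have := E2 m => /= ->; done.
Qed.

Lemma HOM_Alin f : in_HOM am an dM dN f ->
  (forall a x y, an a (x + y) = an a x + an a y) -> Alinear am an f.
Proof.
move=> [l [H E]] anD; split.
  move=> m m'; rewrite !E -big_split; apply: eq_big_In => c /H [[D _] _]; exact: D.
move=> a m; rewrite !E (sum_add _ _ (anD a)); apply: eq_big_In => c /H [[_ L] _]; exact: L.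
Qed.

Variables (B : gring G) (mb : M -> B -> M).

Lemma in_BHOM_ext f g : (forall m, f m = g m) ->
  in_BHOM am an dM dN mb f -> in_BHOM am an dM dN mb g.
Proof. move=> e [l [H1 H2]]; exists l; split=> // m; by rewrite -e. Qed.

Lemma in_BHOM_single b f : in_HOM am an dM dN f ->
  in_BHOM am an dM dN mb (fun m => f (mb m b)).
Proof.
move=> H; exists [:: (b, f)]; split; first by move=> c [<-|[]].
by move=> m; rewrite big_seq1.
Qed.

Lemma in_BHOM_sum (I : Type) (l : seq I) (F : I -> M -> N) :
  (forall i, List.In i l -> in_BHOM am an dM dN mb (F i)) ->
  in_BHOM am an dM dN mb (fun m => \sum_(i <- l) F i m).
Proof.
elim: l => [|a l IH] H.
  by exists [::]; split => // m; rewrite !big_nil.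
have [l1 [H1 E1]] := H a (or_introl erefl).
have [l2 [H2 E2]] := IH (fun i Hi => H i (or_intror Hi)).
exists (l1 ++ l2); split.
  by move=> c Hc; case: (List.in_app_or _ _ _ Hc); auto.
move=> m; rewrite big_cat big_cons /= E1; have := E2 m => /= ->; done.
Qed.

Lemma BHOM_Alin f : in_BHOM am an dM dN mb f ->
  (forall a x y, an a (x + y) = an a x + an a y) ->
  (forall m m' b, mb (m + m') b = mb m b + mb m' b) ->
  (forall a m b, mb (am a m) b = am a (mb m b)) -> Alinear am an f.
Proof.
move=> [l [H E]] anD mbD mbA; split.
  move=> m m'; rewrite !E -big_split; apply: eq_big_In => c /H Hc.
  by have [D _] := HOM_Alin Hc anD; rewrite mbD D.
move=> a m; rewrite !E (sum_add _ _ (anD a)); apply: eq_big_In => c /H Hc.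
by have [_ L] := HOM_Alin Hc anD; rewrite mbA L.
Qed.
End Gen.
Theorem lemma5p4 (G : ggroup) (A B : gring G) (P : gbimod A B) (Q : gbimod B A)
    (mu : P -> Q -> A) (nu : Q -> P -> B) (U : glmod A) :
  morita_context mu nu -> trace_surj mu -> trace_surj nu ->
  lunital (@lact _ _ U) ->
  (* eta is well defined on the tensor product *)
  (forall s, in_T P s -> tensor_zero P U s -> forall p, eta P U s p = 0) /\
  [/\
      (* eta takes values in B . HOM_A(P,U) *)
      (forall s, in_T P s -> inBHOM_PU P U (eta P U s)),
      (* eta is left B-linear *)
      (forall b s, in_T P s -> forall p, eta P U (Tact P b s) p = eta P U s (br p b)),
      (* eta is graded of degree e *)
      (forall g s, in_T P s -> T_homog P U g s ->
         graded_of (@bdeg _ _ _ P) (@ldeg _ _ U) g (eta P U s)),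
      (* eta is surjective onto B . HOM_A(P,U) *)
      (forall h, inBHOM_PU P U h -> exists s, in_T P s /\ forall p, eta P U s p = h p) &
      (* the kernel of eta is torsion: B z = 0 for z \in ker eta *)
      (forall s, in_T P s -> (forall p, eta P U s p = 0) ->
         forall b, tensor_zero P U (Tact P b s))].
Proof.
move=> [[idA idB [Pl Pr] [Ql Qr]] [[muDl muDr muB muAl muAr] [mudeg [[nuDl nuDr nuB nuBl nuBr] [nudeg [ctx1 ctx2]]]]]] trmu trnu Ul.
have muH : forall q, in_HOM (@bl _ _ _ P) (@rmul _ A) (@bdeg _ _ _ P) (@rdeg _ A) (fun p => mu p q).
  move=> q; case: (bdeg_grading Q) => _ _ dec _; have [l [Hl E]] := dec q.
  apply: (in_HOM_ext (f := fun p => \sum_(c <- l) (fun p => mu p c.2) p)).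
    by move=> m /=; rewrite E (sum_add _ _ (muDr m)).
  apply: in_HOM_sum => c Hc; apply: (in_HOM_single (s := c.1)).
    by split; [move=> m m'; exact: muDl | move=> a m; exact: muAl].
  move=> t m Hm; exact: mudeg (Hl c Hc).
have muX : forall q, inX P (fun p => mu p q).
  move=> q; have [l1 E1] := Ql q.
  apply: (in_BHOM_ext (f := fun m => \sum_(c <- l1) (fun p => mu p c.2) (br m c.1))).
    move=> m /=; rewrite E1 (sum_add _ _ (muDr m)); apply: eq_big_In => c _; by rewrite muB.
  by apply: in_BHOM_sum => c _; exact: (in_BHOM_single (@br _ _ _ P) c.1 (muH c.2)).
have Xlin : forall x, inX P x -> Alinear (@bl _ _ _ P) (@rmul _ A) x.
  move=> x Hx; apply: (BHOM_Alin Hx); [exact: rmulDr | exact: brDl | exact: blr].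
have HOMU : forall f u, in_HOM (@bl _ _ _ P) (@rmul _ A) (@bdeg _ _ _ P) (@rdeg _ A) f ->
    in_HOM (@bl _ _ _ P) (@lact _ _ U) (@bdeg _ _ _ P) (@ldeg _ _ U) (fun p => lact (f p) u).
  move=> f u [l [Hl E]]; case: (ldeg_grading U) => _ _ dec _; have [lu [Hlu Eu]] := dec u.
  apply: (in_HOM_ext (f := fun p => \sum_(d <- l) (fun p => \sum_(e <- lu) (fun p => lact (d.2 p) e.2) p) p)).
    move=> p /=; rewrite E (sum_add _ _ (fun x y => lactDl x y u)); apply: eq_big_In => d _.
    by rewrite Eu (sum_add _ _ (@lactDr _ _ U (d.2 p))).
  apply: in_HOM_sum => d Hd; apply: in_HOM_sum => e He; have [[D L] Gd] := Hl d Hd.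
  apply: (in_HOM_single (s := gmul d.1 e.1)).
    by split; [move=> m m'; rewrite D lactDl | move=> a m; rewrite L lactA].
  move=> t m Hm; rewrite gmulA; apply: ldeg_act; [exact: Gd | exact: Hlu].
split.
  move=> s Hs Hz p; have := Hz U (fun x u => lact (x p) u); rewrite /eta; apply.
  split; [move=> x x' u _ _ /=; exact: lactDl | move=> x u u' _; exact: lactDr | move=> x a u _ /=; exact: lactA].
split.
- move=> s Hs; rewrite /inBHOM_PU /eta; apply: in_BHOM_sum => c Hc.
  have [l [Hl E]] := Hs c Hc.
  apply: (in_BHOM_ext (f := fun p => \sum_(d <- l) (fun m => lact (d.2 m) c.2) (br p d.1))).
    by move=> p /=; rewrite E (sum_add _ _ (fun x y => lactDl x y c.2)).
  by apply: in_BHOM_sum => d Hd; exact: (in_BHOM_single (@br _ _ _ P) d.1 (HOMU _ c.2 (Hl d Hd))).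
- by move=> b s _ p; rewrite /eta /Tact big_map.
- move=> g s _ Hh t m Hm; rewrite /eta; apply: deg_sum; first exact: ldeg_grading.
  move=> c Hc; have [r [t' [Gr [Gt E]]]] := Hh c Hc.
  rewrite -E gmulA; apply: ldeg_act => //; exact: Gr.
- move=> h [l [Hl E]].
  suff [s [Hs Es]] : exists s, in_T P s /\ forall p, eta P U s p = \sum_(c <- l) c.2 (br p c.1).
    by exists s; split=> // p; rewrite Es E.
  clear E; elim: l Hl => [|c l IH] Hl.
    by exists [::]; split=> // p; rewrite /eta !big_nil.
  have [s' [Hs' Es']] := IH (fun i Hi => Hl i (or_intror Hi)).
  have [Dc Lc] := HOM_Alin (Hl c (or_introl erefl)) (@lactDr _ _ U).
  have [ld Ed] := trnu c.1.
  exists (map (fun d => (fun p => mu p d.1, c.2 d.2)) ld ++ s'); split.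
    move=> x Hx; case: (List.in_app_or _ _ _ Hx) => [|]; last exact: Hs'.
    by case/List.in_map_iff => d [<- _]; apply: muX.
  move=> p; rewrite /eta big_cat big_cons big_map /=.
  have := Es' p; rewrite /eta => ->; congr (_ + _).
  rewrite Ed (sum_add _ _ (brDr p)) (sum_add _ _ Dc); apply: eq_big_In => d _.
  by rewrite ctx1 Lc.
- move=> s Hs Hz b W phi [phD phUD phB]; have [lb Eb] := trnu b.
  rewrite /Tact big_map /=.
  have X0 : inX P (fun _ => 0) by exists [::]; split=> // m; rewrite big_nil.
  have ph0 : forall u, phi (fun _ => 0) u = 0.
    move=> u; have := phD _ _ u X0 X0; rewrite /= addr0 => H.
    by apply: (addrI (phi (fun _ => 0) u)); rewrite -H addr0.
  have phU0 : forall x, inX P x -> phi x 0 = 0.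
    move=> x Hx; have := phUD x 0 0 Hx; rewrite addr0 => H.
    by apply: (addrI (phi x 0)); rewrite -H addr0.
  have phsum : forall (I : Type) (l : seq I) (F : I -> P -> A) u,
      (forall i, List.In i l -> inX P (F i)) ->
      phi (fun p => \sum_(i <- l) F i p) u = \sum_(i <- l) phi (F i) u.
    move=> I l F u; elim: l => [|a l IH] H.
      have -> : (fun p => \sum_(i <- [::]) F i p) = (fun _ => 0).
        by apply: functional_extensionality => p; rewrite big_nil.
      by rewrite big_nil ph0.
    have Xl : inX P (fun p => \sum_(i <- l) F i p).
      by apply: in_BHOM_sum => i Hi; apply: H; right.
    have -> : (fun p => \sum_(i <- a :: l) F i p) =
              (fun p => F a p + (fun p => \sum_(i <- l) F i p) p).
      by apply: functional_extensionality => p; rewrite big_cons.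
    rewrite (phD (F a) _ u (H a (or_introl erefl)) Xl) big_cons IH //.
    by move=> i Hi; apply: H; right.
  transitivity (\sum_(c <- s) \sum_(d <- lb) phi (fun p => mu p d.1) (lact (c.1 d.2) c.2)).
    apply: eq_big_In => c Hc; have [Dx Lx] := Xlin _ (Hs c Hc).
    have -> : (fun p => c.1 (br p b)) =
              (fun p => \sum_(d <- lb) (fun d p => rmul (mu p d.1) (c.1 d.2)) d p).
      apply: functional_extensionality => p /=.
      rewrite Eb (sum_add _ _ (brDr p)) (sum_add _ _ Dx); apply: eq_big_In => d _.
      by rewrite ctx1 Lx.
    rewrite phsum.
      apply: eq_big_In => d _.
      exact: (phB (fun p => mu p d.1) (c.1 d.2) c.2 (muX d.1)).
    move=> d _; apply: (in_BHOM_ext (f := fun p => mu p (br d.1 (c.1 d.2)))).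
      by move=> p; apply: muAr.
    exact: muX.
  rewrite exchange_big /= (eq_big_In (F' := fun _ => 0)); first by rewrite big1.
  move=> d _; rewrite -(sum_add _ _ (fun u u' => phUD _ u u' (muX d.1))).
  by have := Hz d.2; rewrite /eta => ->; apply: phU0; apply: muX.
Qed.
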